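(* For every integer $\ell\ge 2$, $m_0(\ell)>\ell\, m_{\ell-1}(\ell)$.
   Context: For $S\subset[n]$, $\mathcal F(\overline S)=\{F\in\mathcal F: F\cap S=\emptyset\}$ and $\gamma_j(\mathcal F)=\min_{S\in\binom{[n]}{j}}|\mathcal F(\overline S)|$ (so $\gamma_0(\mathcal F)=|\mathcal F|$). $\tau(\mathcal F)$ is the minimum size of a set meeting all members of $\mathcal F$. For $0\le j<k$, $m_j(k)$ is the maximum of $\gamma_j(\mathcal F)$ over all $n$ and all intersecting families $\mathcal F\subset\binom{[n]}{k}$ (any two members intersect) with $\tau(\mathcal F)=k$. *)

(* Defs.v *)
From mathcomp Require Import all_boot.
Set Implicit Arguments. Unset Strict Implicit. Unset Printing Implicit Defensive.

Definition uniform (n k : nat) (F : {set {set 'I_n}}) : Prop :=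
  forall A, A \in F -> #|A| = k.

Definition intersecting (n : nat) (F : {set {set 'I_n}}) : Prop :=
  forall A B, A \in F -> B \in F -> A :&: B != set0.

Definition transversal (n : nat) (F : {set {set 'I_n}}) (T : {set 'I_n}) : Prop :=
  forall A, A \in F -> T :&: A != set0.

Definition tau_eq (n : nat) (F : {set {set 'I_n}}) (t : nat) : Prop :=
  (exists T, transversal F T /\ #|T| = t) /\
  (forall T, transversal F T -> t <= #|T|).

Definition avoid (n : nat) (F : {set {set 'I_n}}) (S : {set 'I_n}) : {set {set 'I_n}} :=
  [set A in F | A :&: S == set0].

(* gamma_j(F) = min over j-subsets S of [n] of |F(\bar S)|.
   (#|F| is a harmless neutral element: every term is <= #|F|.) *)
Definition gamma (n j : nat) (F : {set {set 'I_n}}) : nat :=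
  \big[minn/#|F|]_(S : {set 'I_n} | #|S| == j) #|avoid F S|.

Definition admissible (n k : nat) (F : {set {set 'I_n}}) : Prop :=
  uniform k F /\ intersecting F /\ tau_eq F k.

Definition is_m (j k v : nat) : Prop :=
  (exists n (F : {set {set 'I_n}}), admissible k F /\ gamma j F = v) /\
  (forall n (F : {set {set 'I_n}}), admissible k F -> gamma j F <= v).

(* Main.v *)
Require Import Defs.
From mathcomp Require Import all_boot zify.
From Stdlib Require Import Classical.
Set Implicit Arguments. Unset Strict Implicit.

Lemma card_bigcup_le (T I : finType) (G : {pred I}) (S : I -> {set T}) :
  #|\bigcup_(i in G) S i| <= \sum_(i in G) #|S i|.
Proof.
apply: (big_ind2 (fun (X : {set T}) (m : nat) => #|X| <= m)).
- by rewrite cards0.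
- move=> X m Y k hX hY; rewrite cardsU.
  apply: leq_trans (leq_subr _ _) _; exact: leq_add.
- by move=> i _.
Qed.

Lemma gamma_le n j (F : {set {set 'I_n}}) : gamma j F <= #|F|.
Proof.
rewrite /gamma; apply: (big_ind (fun m => m <= #|F|)) => //.
- by move=> x y hx _; rewrite geq_min hx.
- move=> S _; apply: subset_leq_card; apply/subsetP => A; rewrite inE; by case/andP.
Qed.

Lemma gamma0 n (F : {set {set 'I_n}}) : gamma 0 F = #|F|.
Proof.
apply/eqP; rewrite eqn_leq gamma_le /=.
rewrite /gamma; apply: (big_ind (fun m => #|F| <= m)) => //.
- by move=> x y hx hy; rewrite leq_min hx hy.
- move=> S; rewrite cards_eq0 => /eqP ->.
  apply: subset_leq_card; apply/subsetP => A hA; by rewrite inE hA setI0 eqxx.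
Qed.

Lemma bigmin_le_seq (I : eqType) (r : seq I) (P : pred I) (G : I -> nat) x i :
  i \in r -> P i -> \big[minn/x]_(j <- r | P j) G j <= G i.
Proof.
elim: r => [//|a r IH]; rewrite inE big_cons => /orP [/eqP <-|hi] hP.
- by rewrite hP geq_minl.
- case: (P a); last exact: IH.
  by rewrite geq_min (IH hi hP) orbT.
Qed.

Lemma gamma_le_term n j (F : {set {set 'I_n}}) (S : {set 'I_n}) : #|S| = j -> gamma j F <= #|avoid F S|.
Proof.
move=> hS; rewrite /gamma; apply: (@bigmin_le_seq _ _ _ _ _ S).
- by rewrite mem_index_enum.
- by rewrite hS.
Qed.

Lemma max_exists (P : nat -> Prop) B :
  (exists v, P v) -> (forall v, P v -> v <= B) ->
  exists v, P v /\ forall w, P w -> w <= v.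
Proof.
elim: B => [|B IH] [v hv] hb.
- exists v; split => // w hw; have := hb w hw; have := hb v hv.
  by rewrite !leqn0 => /eqP -> /eqP ->.
- case: (classic (P B.+1)) => hB.
  + by exists B.+1; split.
  + apply: IH; first by exists v.
    move=> w hw; have := hb w hw; rewrite leq_eqVlt => /orP [/eqP e|//].
    by subst w.
Qed.

Lemma deg_bound n l (F : {set {set 'I_n}}) :
  uniform l F -> intersecting F -> (forall T, Defs.transversal F T -> l <= #|T|) ->
  forall d (T : {set 'I_n}), #|T| + d = l -> #|[set A in F | T \subset A]| <= l ^ d.
Proof.
move=> hu hi ht; elim=> [|d IH] T hT.
- rewrite expn0; rewrite addn0 in hT; apply/card_le1_eqP => A B.
  rewrite !inE => /andP [hA sA] /andP [hB sB].
  have eA : T = A by apply/eqP; rewrite eqEcard sA (hu _ hA) hT leqnn.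
  have eB : T = B by apply/eqP; rewrite eqEcard sB (hu _ hB) hT leqnn.
  by rewrite -eA -eB.
- have [/existsP [G /andP [hG hTG]]|hno] := boolP [exists G in F, T :&: G == set0]; last first.
    have : Defs.transversal F T.
      move=> A hA; apply: contra hno => hTA; apply/existsP; exists A; by rewrite hA.
    move/ht; rewrite -hT addnS ltnNge leq_addr //.
  apply: (@leq_trans #|\bigcup_(x in G) [set A in F | (x |: T) \subset A]|).
    apply: subset_leq_card; apply/subsetP => A; rewrite inE => /andP [hA sA].
    have := hi _ _ hA hG; case/set0Pn => x; rewrite inE => /andP [xA xG].
    apply/bigcupP; exists x => //; rewrite inE hA subUset sA andbT sub1set //.
  apply: leq_trans (card_bigcup_le _ _) _.
  apply: (@leq_trans (\sum_(x in G) l ^ d)).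
    apply: leq_sum => x xG; apply: IH.
    rewrite cardsU1.
    have -> : x \notin T.
      apply/negP => xT; move/eqP: hTG => hTG.
      have : x \in T :&: G by rewrite inE xT xG.
      by rewrite hTG inE.
    by rewrite add1n addSn -addnS.
  by rewrite sum_nat_const hu // expnS.
Qed.

Lemma card_sep (T: finType) (F : {set T}) (p : pred T) :
  #|[set B in F | p B]| = \sum_(B in F) p B.
Proof.
rewrite -sum1_card [RHS]big_mkcond /= [LHS]big_mkcond /=; apply: eq_bigr => B _.
by rewrite inE; case: (B \in F); case: (p B).
Qed.

Lemma key n l (F : {set {set 'I_n}}) A :
  2 <= l -> uniform l F -> intersecting F -> A \in F -> l * gamma l.-1 F < #|F|.
Proof.
move=> hl hu hi hA.
have cAx : forall x, x \in A -> #|A :\ x| = l.-1.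
  by move=> x xA; rewrite -(hu _ hA) (cardsD1 x A) xA.
apply: (@leq_trans (\sum_(B in F) (B != A)).+1); last first.
  rewrite -card_sep (cardsD1 A F) hA add1n ltnS.
  apply: subset_leq_card; apply/subsetP => B; rewrite !inE => /andP [-> ->] //.
rewrite ltnS.
apply: (@leq_trans (\sum_(x in A) #|avoid F (A :\ x)|)).
  rewrite -{1}(hu _ hA) -sum_nat_const; apply: leq_sum => x xA.
  exact: gamma_le_term (cAx x xA).
under eq_bigr => x _ do rewrite /avoid card_sep.
rewrite exchange_big /=; apply: leq_sum => B hB.
rewrite -card_sep.
have [eBA|nBA] := eqVneq B A.
  rewrite eBA /= leqn0 cards_eq0; apply/eqP/setP => x.
  rewrite !inE; apply/negbTE/negP => /andP [xA /eqP h].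
  have : #|A :&: (A :\ x)| = 0 by rewrite h cards0.
  rewrite (setIidPr (subsetDl A [set x])) cAx //; lia.
rewrite /=; apply/card_le1_eqP => x y; rewrite !inE => /andP [xA /eqP hx] /andP [yA /eqP hy].
have := hi _ _ hB hA; case/set0Pn => z; rewrite inE => /andP [zB zA].
have ex : z = x.
  apply/eqP; apply/negPn/negP => nzx.
  have : z \in B :&: (A :\ x) by rewrite !inE zB zA nzx.
  by rewrite hx inE.
have ey : z = y.
  apply/eqP; apply/negPn/negP => nzy.
  have : z \in B :&: (A :\ y) by rewrite !inE zB zA nzy.
  by rewrite hy inE.
by rewrite -ex -ey.
Qed.

Lemma subset_card (T : finType) k : forall m (C : {set T}), #|C| = m -> k <= m ->
  exists B : {set T}, B \subset C /\ #|B| = k.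
Proof.
elim=> [|m IH] C hC hk.
- by exists C; split => //; rewrite hC; move: hk; rewrite leqn0 => /eqP.
- rewrite leq_eqVlt in hk; case/orP: hk => [/eqP ->|hk]; first by exists C.
  have : C != set0 by rewrite -card_gt0 hC.
  case/set0Pn => x xC.
  have hCx : #|C :\ x| = m by move: hC; rewrite (cardsD1 x C) xC add1n => -[].
  have [B [sB cB]] := IH (C :\ x) hCx hk.
  exists B; split => //; apply: subset_trans sB _; exact: subsetDl.
Qed.

Lemma inter_big n l (A B : {set 'I_n}) : n < l + l -> #|A| = l -> #|B| = l -> A :&: B != set0.
Proof.
move=> hn hA hB; apply/negP => /eqP h.
have := cardsUI A B; rewrite h cards0 addn0 hA hB => e.
have := max_card (mem (A :|: B)); rewrite card_ord e; lia.
Qed.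

Lemma example l : 2 <= l -> exists n (F : {set {set 'I_n}}), admissible l F.
Proof.
move=> hl; exists (l + l.-1), [set A : {set 'I_(l + l.-1)} | #|A| == l].
have hn : l + l.-1 < l + l by lia.
split; [|split].
- by move=> A; rewrite inE => /eqP.
- move=> A B; rewrite !inE => /eqP hA /eqP hB; exact: inter_big hA hB.
- split.
  + have hle : l <= #|[set: 'I_(l + l.-1)]| by rewrite cardsT card_ord leq_addr.
    have [T [_ cT]] := @subset_card _ l _ [set: 'I_(l + l.-1)] erefl hle.
    exists T; split => // A; rewrite inE => /eqP hA; exact: inter_big hn cT hA.
  + move=> T hT; rewrite leqNgt; apply/negP => hlt.
    have hle : l <= #|~: T| by have := cardsC T; rewrite card_ord; lia.
    have [B [sB cB]] := @subset_card _ l _ (~: T) erefl hle.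
    have := hT B; rewrite inE cB eqxx => /(_ isT); apply/negP; rewrite negbK.
    apply/eqP/setP => x; rewrite !inE; apply/negP => /andP [xT xB].
    by have := subsetP sB x xB; rewrite inE xT.
Qed.

Lemma size_bound n l (F : {set {set 'I_n}}) : admissible l F -> #|F| <= l ^ l.
Proof.
move=> [hu [hi [_ ht]]].
have := @deg_bound n l F hu hi ht l set0; rewrite cards0 add0n => /(_ erefl).
congr (_ <= _); apply: eq_card => A; by rewrite inE sub0set andbT.
Qed.

Lemma nonempty n l (F : {set {set 'I_n}}) : 1 <= l -> admissible l F -> exists A, A \in F.
Proof.
move=> hl [_ [_ [_ ht]]].
have [/set0Pn [A hA]|/negPn/eqP e] := boolP (F != set0); first by exists A.
have : Defs.transversal F set0 by move=> A; rewrite e inE.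
move/ht; rewrite cards0; lia.
Qed.

Theorem proposition5p1 (l : nat) (hl : 2 <= l) :
  exists a b : nat, [/\ is_m 0 l a, is_m l.-1 l b & l * b < a].
Proof.
have [n0 [F0 h0]] := example hl.
have [a [[na [Fa [ha ea]]] hamax]] :=
  @max_exists (fun v => exists n (F : {set {set 'I_n}}), admissible l F /\ gamma 0 F = v) (l ^ l)
   (ex_intro _ _ (ex_intro _ n0 (ex_intro _ F0 (conj h0 erefl))))
   (fun v '(ex_intro n (ex_intro F (conj hF e))) => eq_ind _ (fun w => w <= l ^ l)
        (leq_trans (gamma_le _ _) (size_bound hF)) _ e).
have [b [[nb [Fb [hb eb]]] hbmax]] :=
  @max_exists (fun v => exists n (F : {set {set 'I_n}}), admissible l F /\ gamma l.-1 F = v) (l ^ l)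
   (ex_intro _ _ (ex_intro _ n0 (ex_intro _ F0 (conj h0 erefl))))
   (fun v '(ex_intro n (ex_intro F (conj hF e))) => eq_ind _ (fun w => w <= l ^ l)
        (leq_trans (gamma_le _ _) (size_bound hF)) _ e).
exists a, b; split.
- split; first by exists na, Fa.
  move=> n F hF; apply: hamax; by exists n, F.
- split; first by exists nb, Fb.
  move=> n F hF; apply: hbmax; by exists n, F.
- have [A hA] := nonempty (ltnW hl) hb.
  case: (hb) => hu [hi _].
  rewrite -eb; apply: leq_trans (key hl hu hi hA) _; rewrite -gamma0.
  apply: hamax; exists nb, Fb; split => //.
Qed.
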